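(* Let $X$ be a real Hilbert space, let $\rho>-1$, and let $A\colon X\rightrightarrows X$ be $\rho$-comonotone. Then $$\operatorname{gra} A=\{(J_A x,\,(\mathrm{Id}-J_A)x) : x\in \operatorname{ran}(\mathrm{Id}+A)\}.$$ Moreover, $A$ is maximally $\rho$-comonotone if and only if $\operatorname{ran}(\mathrm{Id}+A)=X$, in which case $$\operatorname{gra} A=\{(J_A x,\,(\mathrm{Id}-J_A)x) : x\in X\}.$$
   Context: $X$ is a real Hilbert space with inner product $\langle\cdot,\cdot\rangle$ and norm $\|\cdot\|$; $\mathrm{Id}$ is the identity on $X$. For a set-valued operator $A\colon X\rightrightarrows X$, $\operatorname{gra}A=\{(x,u): u\in Ax\}$, $A^{-1}$ is the operator with $\operatorname{gra}A^{-1}=\{(u,x):(x,u)\in\operatorname{gra}A\}$, and the resolvent is $J_A=(\mathrm{Id}+A)^{-1}$ (whose domain is $\operatorname{ran}(\mathrm{Id}+A)$). For $\rho\in\mathbb R$, $A$ is $\rho$-comonotone if $\langle x-y,u-v\rangle\ge\rho\|u-v\|^2$ for all $(x,u),(y,v)\in\operatorname{gra}A$; it is maximally $\rho$-comonotone if it is $\rho$-comonotone and no $\rho$-comonotone operator has a graph properly containing $\operatorname{gra}A$. *)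

(* Defs.v *)
From HB Require Import structures.
From mathcomp Require Import all_boot all_order all_algebra.
From mathcomp Require Import all_classical all_reals all_analysis.
Set Implicit Arguments. Unset Strict Implicit. Unset Printing Implicit Defensive.
Import Order.TTheory GRing.Theory Num.Theory.
Import numFieldNormedType.Exports.
Local Open Scope classical_set_scope.
Local Open Scope ring_scope.

Definition is_inner_product (R : realType) (X : completeNormedModType R)
  (ip : X -> X -> R) : Prop :=
  [/\ forall x y, ip x y = ip y x,
      forall a x y z, ip (a *: x + y) z = a * ip x z + ip y z
    & forall x, ip x x = `|x| ^+ 2].

(* Set-valued operators A : X ⇉ X are represented as A : X -> set X. *)
Definition gra (R : realType) (X : completeNormedModType R) (A : X -> set X)
  : set (X * X) := [set p | A p.1 p.2].

Definition comonotone (R : realType) (X : completeNormedModType R)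
  (ip : X -> X -> R) (rho : R) (A : X -> set X) : Prop :=
  forall x u y v, A x u -> A y v -> rho * `|u - v| ^+ 2 <= ip (x - y) (u - v).

Definition max_comonotone (R : realType) (X : completeNormedModType R)
  (ip : X -> X -> R) (rho : R) (A : X -> set X) : Prop :=
  comonotone ip rho A /\
  forall B : X -> set X, comonotone ip rho B ->
    gra A `<=` gra B -> gra B = gra A.

Definition ran_IdA (R : realType) (X : completeNormedModType R)
  (A : X -> set X) : set X :=
  [set x | exists y u, A y u /\ x = y + u].

Definition resolvent_rel (R : realType) (X : completeNormedModType R)
  (A : X -> set X) (x : X) : set X :=
  [set y | exists u, A y u /\ x = y + u].

(* The resolvent as a function: J_A x is (a chosen) element of (Id+A)^{-1} x
   when x ∈ ran (Id + A) (arbitrary value 0 outside). *)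
Definition resolvent (R : realType) (X : completeNormedModType R)
  (A : X -> set X) (x : X) : X :=
  xget 0 (resolvent_rel A x).

(* Main.v *)
Require Import Defs.
From HB Require Import structures.
From mathcomp Require Import all_boot all_order all_algebra.
From mathcomp Require Import all_classical all_reals all_analysis.
From mathcomp Require Import ring lra.
Import Order.TTheory GRing.Theory Num.Theory.
Import numFieldNormedType.Exports.
Local Open Scope classical_set_scope.
Local Open Scope ring_scope.

Lemma ipC {R : realType} {X : completeNormedModType R} {ip : X -> X -> R}
  (Hip : is_inner_product ip) x y : ip x y = ip y x.
Proof. by case: Hip. Qed.

Lemma ipDl {R : realType} {X : completeNormedModType R} {ip : X -> X -> R}
  (Hip : is_inner_product ip) x y z : ip (x + y) z = ip x z + ip y z.
Proof. case: (Hip) => _ H _; by rewrite -[x in LHS]scale1r H mul1r. Qed.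

Lemma ip0l {R : realType} {X : completeNormedModType R} {ip : X -> X -> R}
  (Hip : is_inner_product ip) z : ip 0 z = 0.
Proof. have := ipDl Hip 0 0 z; rewrite addr0; lra. Qed.

Lemma ipZl {R : realType} {X : completeNormedModType R} {ip : X -> X -> R}
  (Hip : is_inner_product ip) a x z : ip (a *: x) z = a * ip x z.
Proof. case: (Hip) => _ H _; by rewrite -[a *: x]addr0 H (ip0l Hip) addr0. Qed.

Lemma ipNl {R : realType} {X : completeNormedModType R} {ip : X -> X -> R}
  (Hip : is_inner_product ip) x z : ip (- x) z = - ip x z.
Proof. by rewrite -scaleN1r ipZl // mulN1r. Qed.

Lemma ipBl {R : realType} {X : completeNormedModType R} {ip : X -> X -> R}
  (Hip : is_inner_product ip) x y z : ip (x - y) z = ip x z - ip y z.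
Proof. by rewrite ipDl // ipNl. Qed.

Lemma ipDr {R : realType} {X : completeNormedModType R} {ip : X -> X -> R}
  (Hip : is_inner_product ip) x y z : ip z (x + y) = ip z x + ip z y.
Proof. by rewrite !(ipC Hip z) ipDl. Qed.
Lemma ipZr {R : realType} {X : completeNormedModType R} {ip : X -> X -> R}
  (Hip : is_inner_product ip) a x z : ip z (a *: x) = a * ip z x.
Proof. by rewrite !(ipC Hip z) ipZl. Qed.
Lemma ipNr {R : realType} {X : completeNormedModType R} {ip : X -> X -> R}
  (Hip : is_inner_product ip) x z : ip z (- x) = - ip z x.
Proof. by rewrite !(ipC Hip z) ipNl. Qed.
Lemma ipBr {R : realType} {X : completeNormedModType R} {ip : X -> X -> R}
  (Hip : is_inner_product ip) x y z : ip z (x - y) = ip z x - ip z y.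
Proof. by rewrite !(ipC Hip z) ipBl. Qed.
Lemma ip0r {R : realType} {X : completeNormedModType R} {ip : X -> X -> R}
  (Hip : is_inner_product ip) z : ip z 0 = 0.
Proof. by rewrite ipC // ip0l. Qed.
Lemma ipnorm {R : realType} {X : completeNormedModType R} {ip : X -> X -> R}
  (Hip : is_inner_product ip) x : `|x| ^+ 2 = ip x x.
Proof. by case: Hip. Qed.
Lemma ipxx_ge0 {R : realType} {X : completeNormedModType R} {ip : X -> X -> R}
  (Hip : is_inner_product ip) x : 0 <= ip x x.
Proof. by rewrite -ipnorm // sqr_ge0. Qed.
Lemma ipxx_eq0 {R : realType} {X : completeNormedModType R} {ip : X -> X -> R}
  (Hip : is_inner_product ip) x : ip x x = 0 -> x = 0.
Proof. rewrite -ipnorm // => /eqP; rewrite sqrf_eq0 normr_eq0 => /eqP //. Qed.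

Lemma CS {R : realType} {X : completeNormedModType R} {ip : X -> X -> R}
  (Hip : is_inner_product ip) x y : `|ip x y| <= `|x| * `|y|.
Proof.
have [->|y0] := eqVneq y 0; first by rewrite ip0r // normr0 normr0 mulr0.
have ny : 0 < `|y| by rewrite normr_gt0.
set t := ip x y / `|y| ^+ 2.
have := ipxx_ge0 Hip (x - t *: y).
rewrite !(ipBl Hip, ipBr Hip, ipZl Hip, ipZr Hip) -!ipnorm // (ipC Hip y x).
rewrite /t => H.
have H2 : ip x y ^+ 2 <= (`|x| * `|y|) ^+ 2.
  have yy : `|y| ^+ 2 != 0 by rewrite expf_neq0 // gt_eqF.
  move: H; set a := ip x y; set n := `|y| ^+ 2; set m := `|x| ^+2 => H.
  have : 0 <= (m - a / n * a - (a / n * a - a / n * (a / n * n))) * n.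
    by rewrite mulr_ge0 // ltW // exprn_gt0.
  have -> : (m - a / n * a - (a / n * a - a / n * (a / n * n))) * n = m * n - a ^+ 2.
    by field.
  by rewrite exprMn subr_ge0.
by rewrite -ler_sqr ?nnegrE ?mulr_ge0 // real_normK // num_real.
Qed.

Definition Phi {R : realType} {X : completeNormedModType R} (ip : X -> X -> R)
  (a b x u : X) : R := ip x b + ip a u - ip a b + (ip x x + ip u u) / 2.

Lemma Phi_comb {R : realType} {X : completeNormedModType R} {ip : X -> X -> R}
  (Hip : is_inner_product ip) a b x u x' u' t :
  Phi ip a b (x + t *: (x' - x)) (u + t *: (u' - u)) =
  (1 - t) * Phi ip a b x u + t * Phi ip a b x' u'
  - t * (1 - t) / 2 * (ip (x' - x) (x' - x) + ip (u' - u) (u' - u)).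
Proof.
rewrite /Phi !(ipDl Hip, ipDr Hip, ipZl Hip, ipZr Hip, ipBl Hip, ipBr Hip, ipNl Hip, ipNr Hip).
rewrite (ipC Hip x' x) (ipC Hip u' u).
by field.
Qed.

Lemma Phi_G {R : realType} {X : completeNormedModType R} {ip : X -> X -> R}
  (Hip : is_inner_product ip) a b a' b' :
  Phi ip a' b' a b = ip a b - ip (a - a') (b - b') + (ip a a + ip b b) / 2.
Proof.
rewrite /Phi !(ipBl Hip, ipBr Hip) (ipC Hip a' b); ring.
Qed.

Lemma real_lim {R : realType} (m be ga : R) : 0 <= ga ->
  (forall t, 0 < t -> t <= 1 -> m <= be + t * ga) -> m <= be.
Proof.
move=> ga0 H; rewrite leNgt; apply/negP => Hlt.
set d := m - be.
have d0 : 0 < d by rewrite /d subr_gt0.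
set t := d / (d + ga).
have dg : 0 < d + ga by lra.
have t0 : 0 < t by rewrite /t divr_gt0.
have t1 : t <= 1 by rewrite /t ler_pdivrMr // mul1r; lra.
have := H t t0 t1.
have E : t * (d + ga) = d by rewrite /t divfK // gt_eqF.
rewrite /d in E d0; nra.
Qed.

Lemma Phi_shift {R : realType} {X : completeNormedModType R} {ip : X -> X -> R}
  (Hip : is_inner_product ip) a b x u dx du :
  Phi ip a b x u = Phi ip a b (x - dx) (u - du) + ip dx b + ip a du + ip x dx
    + ip u du - (ip dx dx + ip du du) / 2.
Proof.
rewrite /Phi !(ipBl Hip, ipBr Hip) (ipC Hip dx x) (ipC Hip du u).
by field.
Qed.

Lemma cauchy_seq {R : realType} {X : completeNormedModType R} (w : nat -> X) :
  (forall n k, (n <= k)%N -> `|w k - w n| ^+ 2 <= 8 * n.+1%:R^-1) -> cvg (w @ \oo).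
Proof.
move=> H.
suff : cauchy (w @ \oo) by exact: cauchy_cvg.
suff : cauchy_ex (w @ \oo) by exact: cauchy_exP.
move=> e e0; rewrite /fmapE -ball_normE /ball_.
have e2 : 0 < e ^+ 2 / 8 by rewrite divr_gt0 // exprn_gt0.
have [n ne] : exists n : nat, n.+1%:R^-1 < e ^+ 2 / 8.
  exists (Num.truncn (e ^+ 2 / 8)^-1).
  by rewrite -ltf_pV2 ?(posrE,invr_gt0) // invrK truncnS_gt.
exists (w n), n => // k nk /=.
have := H n k nk; rewrite distrC => Hk.
have h : `|w n - w k| ^+ 2 < e ^+ 2 by move: Hk ne; set t := (n.+1%:R)^-1 => Hk ne; lra.
by rewrite -ltr_sqr ?nnegrE // ltW.
Qed.

Lemma minty {R : realType} {X : completeNormedModType R} {ip : X -> X -> R}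
  (Hip : is_inner_product ip) (G : X -> X -> Prop)
  (Gmono : forall a b a' b', G a b -> G a' b' -> 0 <= ip (a - a') (b - b'))
  (Gmax : forall x u, (forall a b, G a b -> 0 <= ip (x - a) (u - b)) -> G x u) :
  exists x u, G x u /\ x + u = 0.
Proof.
have [a0 [b0 G0]] : exists a b, G a b.
  case: (pselect (exists a b, G a b)) => // NG.
  exists 0, 0; apply: Gmax => a b Gab; exfalso; apply: NG; by exists a, b.
pose S x u c := forall a b, G a b -> Phi ip a b x u <= c.
have S_mono : forall x u c c', S x u c -> c <= c' -> S x u c'.
  by move=> x u c c' H cc a b Gab; exact: le_trans (H a b Gab) cc.
have sq : forall x u, 0 <= ip x x + ip u u + 2 * ip x u.
  move=> x u; have := ipxx_ge0 Hip (x + u).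
  rewrite !(ipDl Hip, ipDr Hip) (ipC Hip u x); lra.
have S_ge0 : forall x u c, S x u c -> 0 <= c.
  move=> x u c H.
  case: (pselect (forall a b, G a b -> 0 <= ip (x - a) (u - b))) => [Hall|Hn].
  - have := H x u (Gmax x u Hall); rewrite Phi_G // !subrr ip0l //.
    have := sq x u; lra.
  - move/existsNP: Hn => [a /existsNP [b /not_implyP [Gab /negP]]].
    rewrite -ltNge => Hlt.
    have := H a b Gab; rewrite /Phi.
    move: Hlt; rewrite !(ipBl Hip, ipBr Hip) (ipC Hip a u).
    have := sq x u; lra.
pose V := [set c | exists x u, S x u c].
have V0 : V (ip a0 b0 + (ip a0 a0 + ip b0 b0) / 2).
  exists a0, b0 => a b Gab; rewrite Phi_G //; have := Gmono _ _ _ _ G0 Gab; lra.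
have lbV : lbound V 0 by move=> c [x [u H]]; exact: S_ge0 H.
have hlb : has_lbound V by exists 0.
have hinf : has_inf V by split; [exists (ip a0 b0 + (ip a0 a0 + ip b0 b0) / 2) | ].
set m := inf V.
have m_le : forall x u c, S x u c -> m <= c.
  by move=> x u c H; apply: (ge_inf hlb); exists x, u.
have m0 : 0 <= m by apply: lb_le_inf => //; exists (ip a0 b0 + (ip a0 a0 + ip b0 b0) / 2).
have adh : forall n : nat, exists p : X * X, S p.1 p.2 (m + n.+1%:R^-1).
  move=> n; have e0 : 0 < (n.+1%:R)^-1 :> R by rewrite invr_gt0 ltr0Sn.
  have [c [x [u Hc]] cm] := inf_adherent e0 hinf.
  by exists (x, u); apply: S_mono Hc _; apply: ltW.
have [f Hf] := choice adh.
pose xs n := (f n).1; pose us n := (f n).2.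
have bnd : forall x u c x' u' c', S x u c -> S x' u' c' ->
    ip (x' - x) (x' - x) + ip (u' - u) (u' - u) <= 4 * (c + c') - 8 * m.
  move=> x u c x' u' c' H H'.
  set D := ip (x' - x) (x' - x) + ip (u' - u) (u' - u).
  have : S (x + 2^-1 *: (x' - x)) (u + 2^-1 *: (u' - u)) ((c + c') / 2 - D / 8).
    move=> a b Gab; rewrite (Phi_comb Hip); have := H a b Gab; have := H' a b Gab.
    rewrite -/D; lra.
  move/m_le; lra.
have eps_mono : forall n k : nat, (n <= k)%N -> k.+1%:R^-1 <= n.+1%:R^-1 :> R.
  by move=> n k nk; rewrite lef_pV2 ?posrE ?ltr0Sn // ler_nat.
have bnd2 : forall n k, (n <= k)%N ->
    ip (xs k - xs n) (xs k - xs n) + ip (us k - us n) (us k - us n) <= 8 * n.+1%:R^-1.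
  move=> n k nk; have := bnd _ _ _ _ _ _ (Hf n) (Hf k); have := eps_mono _ _ nk.
  set t1 := (n.+1%:R)^-1; set t2 := (k.+1%:R)^-1; lra.
have cx : cvg (xs @ \oo).
  apply: cauchy_seq => n k nk; rewrite (ipnorm Hip).
  have := bnd2 _ _ nk; have := ipxx_ge0 Hip (us k - us n).
  set t1 := (n.+1%:R)^-1; lra.
have cu : cvg (us @ \oo).
  apply: cauchy_seq => n k nk; rewrite (ipnorm Hip).
  have := bnd2 _ _ nk; have := ipxx_ge0 Hip (xs k - xs n).
  set t1 := (n.+1%:R)^-1; lra.
move/cvg_ex: cx => [x0 Hx0]; move/cvg_ex: cu => [u0 Hu0].
have Sm : S x0 u0 m.
  move=> a b Gab; apply/ler_addgt0Pr => e e0.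
  set C := `|b| + `|x0| + `|a| + `|u0| + 1.
  have C0 : 0 < C by rewrite /C; have := normr_ge0 b; have := normr_ge0 x0; have := normr_ge0 a; have := normr_ge0 u0; lra.
  set d := e / (2 * C).
  have d0 : 0 < d by rewrite /d divr_gt0 // mulr_gt0.
  have dC : d * C = e / 2 by rewrite /d; field; rewrite gt_eqF.
  have e2 : 0 < e / 2 by rewrite divr_gt0.
  have [N1 N1e] : exists n : nat, n.+1%:R^-1 < e / 2.
    exists (Num.truncn (e / 2)^-1).
    by rewrite -ltf_pV2 ?(posrE,invr_gt0) // invrK truncnS_gt.
  move/cvgrPdist_lt: Hx0 => /(_ d d0) [N2 _ HN2].
  move/cvgrPdist_lt: Hu0 => /(_ d d0) [N3 _ HN3].
  pose n := maxn N1 (maxn N2 N3).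
  have hx : `|x0 - xs n| < d.
    by apply: HN2; rewrite /= (leq_trans (leq_maxl N2 N3) (leq_maxr N1 _)).
  have hu : `|u0 - us n| < d.
    by apply: HN3; rewrite /= (leq_trans (leq_maxr N2 N3) (leq_maxr N1 _)).
  have hn : n.+1%:R^-1 < e / 2 :> R.
    by apply: le_lt_trans N1e; apply: eps_mono; rewrite leq_maxl.
  rewrite (Phi_shift Hip a b x0 u0 (x0 - xs n) (u0 - us n)) !subKr.
  have Hfn := Hf n a b Gab; rewrite -/(xs n) -/(us n) in Hfn.
  set dx := x0 - xs n in hx *; set du := u0 - us n in hu *.
  have i1 : ip dx b <= d * `|b|.
    apply: le_trans (ler_norm _) _; apply: le_trans (CS Hip _ _) _.
    by apply: ler_wpM2r => //; exact: ltW hx.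
  have i2 : ip a du <= `|a| * d.
    apply: le_trans (ler_norm _) _; apply: le_trans (CS Hip _ _) _.
    by apply: ler_wpM2l => //; exact: ltW hu.
  have i3 : ip x0 dx <= `|x0| * d.
    apply: le_trans (ler_norm _) _; apply: le_trans (CS Hip _ _) _.
    by apply: ler_wpM2l => //; exact: ltW hx.
  have i4 : ip u0 du <= `|u0| * d.
    apply: le_trans (ler_norm _) _; apply: le_trans (CS Hip _ _) _.
    by apply: ler_wpM2l => //; exact: ltW hu.
  have j1 := ipxx_ge0 Hip dx; have j2 := ipxx_ge0 Hip du.
  have dC' : d * `|b| + d * `|x0| + d * `|a| + d * `|u0| + d = e / 2.
    by rewrite -dC /C; ring.
  move: Hfn hn; set t := (n.+1%:R)^-1 => Hfn hn.
  lra.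
have deriv : forall a b, G a b ->
    m <= ip a b + ip a x0 + ip b u0 - (ip x0 x0 + ip u0 u0) / 2.
  move=> a b Gab.
  set D := ip (a - x0) (a - x0) + ip (b - u0) (b - u0).
  have D0 : 0 <= D / 2.
    by rewrite divr_ge0 // /D addr_ge0 // ipxx_ge0.
  set Y := ip a b + (ip a a + ip b b) / 2.
  have key : forall t, 0 < t -> t <= 1 -> m <= (Y - D / 2) + t * (D / 2).
    move=> t t0 t1.
    have : S (x0 + t *: (a - x0)) (u0 + t *: (b - u0))
             ((1 - t) * m + t * Y - t * (1 - t) / 2 * D).
      move=> a' b' G'; rewrite (Phi_comb Hip) -/D.
      have h1 := Sm a' b' G'.
      have h2 := Gmono _ _ _ _ Gab G'.
      have hA : (1 - t) * Phi ip a' b' x0 u0 <= (1 - t) * m.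
        by apply: ler_wpM2l => //; lra.
      have hB : t * Phi ip a' b' a b <= t * Y.
        apply: ler_wpM2l; first exact: ltW.
        by rewrite (Phi_G Hip) /Y; lra.
      lra.
    move/m_le => H.
    rewrite -(ler_pM2l t0).
    lra.
  have := @real_lim _ _ _ _ D0 key.
  rewrite /Y /D !(ipBl Hip, ipBr Hip) (ipC Hip x0 a) (ipC Hip u0 b); lra.
have Gn : G (- u0) (- x0).
  apply: Gmax => a b Gab; have := deriv a b Gab.
  have := sq x0 u0.
  rewrite !(ipBl Hip, ipBr Hip, ipNl Hip, ipNr Hip) (ipC Hip b u0) (ipC Hip u0 x0).
  lra.
have := deriv _ _ Gn.
rewrite !(ipNl Hip, ipNr Hip) opprK (ipC Hip u0 x0) => H.
have E : ip (x0 + u0) (x0 + u0) = 0.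
  have := ipxx_ge0 Hip (x0 + u0).
  rewrite !(ipDl Hip, ipDr Hip) (ipC Hip u0 x0); lra.
have E0 := ipxx_eq0 Hip _ E.
have ex : x0 = - u0 by apply/eqP; rewrite -addr_eq0 E0.
have eu : u0 = - x0 by apply/eqP; rewrite -addr_eq0 addrC E0.
exists x0, u0; split => //.
rewrite {1}ex {2}eu; exact: Gn.
Qed.

Lemma lin1 (V:zmodType) (x z w y r : V) : x + z + w - y = x - (y - z - r) + (w - r).
Proof. rewrite !opprB -[in RHS]addrA [w - r]addrC [r + (z - y)]addrC -[(z - y) + r + _]addrA addNKr.
by rewrite !addrA addrAC. Qed.
Lemma subDD (V : zmodType) (a b c d : V) : (a + b) - (c + d) = (a - c) + (b - d).
Proof. by rewrite opprD addrACA. Qed.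

Lemma como_uniq {R : realType} {X : completeNormedModType R} {ip : X -> X -> R}
  (Hip : is_inner_product ip) (rho : R) (Hrho : -1 < rho) (A : X -> set X)
  (HA : comonotone ip rho A) y1 u1 y2 u2 :
  A y1 u1 -> A y2 u2 -> y1 + u1 = y2 + u2 -> y1 = y2 /\ u1 = u2.
Proof.
move=> H1 H2 E.
have Eu : u1 - u2 = - (y1 - y2).
  have -> : u1 = y2 + u2 - y1 by rewrite -E addrC addKr.
  by rewrite addrAC addrK opprB.
have := HA _ _ _ _ H1 H2; rewrite Eu normrN (ipnorm Hip) (ipNr Hip) => H.
have H0 : ip (y1 - y2) (y1 - y2) = 0.
  have := ipxx_ge0 Hip (y1 - y2); nra.
have /eqP : y1 - y2 = 0 by apply: ipxx_eq0 H0.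
rewrite subr_eq0 => /eqP ey; split => //.
by move/eqP: Eu; rewrite ey subrr oppr0 subr_eq0 => /eqP.
Qed.

Lemma resolventE {R : realType} {X : completeNormedModType R} {ip : X -> X -> R}
  (Hip : is_inner_product ip) (rho : R) (Hrho : -1 < rho) (A : X -> set X)
  (HA : comonotone ip rho A) y u : A y u -> resolvent A (y + u) = y.
Proof.
move=> Ayu.
have : resolvent_rel A (y + u) (resolvent A (y + u)).
  by rewrite /resolvent; apply: (@xgetI _ 0 _ y); exists u.
case=> u' [Au' E].
by have [] := como_uniq Hip _ Hrho _ HA _ _ _ _ Au' Ayu (esym E).
Qed.

Lemma resolvent_spec {R : realType} {X : completeNormedModType R} (A : X -> set X) x :
  ran_IdA A x -> A (resolvent A x) (x - resolvent A x).
Proof.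
case=> y [u [Ayu E0]].
have : resolvent_rel A x (resolvent A x).
  by rewrite /resolvent; apply: (@xgetI _ 0 _ y); exists u.
case=> u' [Au' E].
have -> : x - resolvent A x = u' by apply/eqP; rewrite subr_eq [u' + _]addrC -E.
done.
Qed.

Lemma max_point {R : realType} {X : completeNormedModType R} {ip : X -> X -> R}
  (Hip : is_inner_product ip) (rho : R) (A : X -> set X)
  (HA : max_comonotone ip rho A) y u :
  (forall x v, A x v -> rho * `|u - v| ^+ 2 <= ip (y - x) (u - v)) -> A y u.
Proof.
move=> Hyu; case: HA => HA Hmax.
pose B := fun a => [set b | A a b \/ (a = y /\ b = u)].
have HB : comonotone ip rho B.
  move=> x1 v1 x2 v2 [H1|[-> ->]] [H2|[-> ->]].
  - exact: HA.
  - rewrite -(opprB u v1) normrN -(opprB y x1) (ipNl Hip) (ipNr Hip) opprK. exact: Hyu.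
  - exact: Hyu.
  - by rewrite !subrr normr0 expr0n /= mulr0 ip0l.
have sub : gra A `<=` gra B by move=> [a b] /= H; rewrite /gra /B /=; left.
have /seteqP [H _] := Hmax B HB sub.
by apply: (H (y, u)); rewrite /gra /B /=; right.
Qed.



Lemma max_surj {R : realType} {X : completeNormedModType R} {ip : X -> X -> R}
  (Hip : is_inner_product ip) (rho : R) (Hrho : -1 < rho) (A : X -> set X)
  (HA : max_comonotone ip rho A) z : ran_IdA A z.
Proof.
have r1 : 0 < 1 + rho by lra.
have r1n : 1 + rho != 0 by rewrite gt_eqF.
pose k := rho / (1 + rho).
pose G := fun a b => A (a + z + k *: b) ((1 + rho)^-1 *: b).
have key : forall da db, ip (da + k *: db) ((1 + rho)^-1 *: db)
     - rho * `|(1 + rho)^-1 *: db| ^+ 2 = ip da db / (1 + rho).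
  move=> da db; rewrite (ipnorm Hip) !(ipDl Hip, ipZl Hip, ipZr Hip) /k.
  by field.
have Gmono : forall a b a' b', G a b -> G a' b' -> 0 <= ip (a - a') (b - b').
  move=> a b a' b' H1 H2; have := HA.1 _ _ _ _ H1 H2.
  have -> : a + z + k *: b - (a' + z + k *: b') = (a - a') + k *: (b - b').
    by rewrite scalerBr subDD subDD subrr addr0.
  rewrite -scalerBr -subr_ge0 key => H.
  by have := mulr_ge0 H (ltW r1); rewrite divfK.
have Gmax : forall x u, (forall a b, G a b -> 0 <= ip (x - a) (u - b)) -> G x u.
  move=> x w Hxw; apply: (@max_point _ _ _ Hip rho A HA) => y' v Ayv.
  pose a := y' - z - rho *: v; pose b := (1 + rho) *: v.
  have Gab : G a b.
    rewrite /G /a /b !scalerA mulVf // scale1r /k mulfVK //.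
    by rewrite addrAC subrK subrK.
  have E1 : x + z + k *: w - y' = (x - a) + k *: (w - b).
    rewrite /b scalerBr scalerA /k mulfVK // /a; exact: lin1.
  have E2 : (1 + rho)^-1 *: w - v = (1 + rho)^-1 *: (w - b).
    by rewrite /b scalerBr scalerA mulVf // scale1r.
  rewrite E1 E2 -subr_ge0 key.
  by rewrite divr_ge0 ?(ltW r1) // Hxw.
have [x [u [Gxu E]]] := minty Hip _ Gmono Gmax.
exists (x + z + k *: u), ((1 + rho)^-1 *: u); split => //.
have -> : x = - u by apply/eqP; rewrite -addr_eq0 E.
rewrite -addrA -scalerDl /k.
have -> : rho / (1 + rho) + (1 + rho)^-1 = 1 by field.
by rewrite scale1r addrAC addNr add0r.
Qed.

Theorem theorem2p16 (R : realType) (X : completeNormedModType R)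
  (ip : X -> X -> R) (Hip : is_inner_product ip)
  (rho : R) (Hrho : -1 < rho) (A : X -> set X) (HA : comonotone ip rho A) :
  [/\ gra A = [set p | exists x, ran_IdA A x /\
                 p = (resolvent A x, x - resolvent A x)],
      max_comonotone ip rho A <-> ran_IdA A = setT
    & ran_IdA A = setT ->
      gra A = [set p | exists x : X, p = (resolvent A x, x - resolvent A x)]].
Proof.
have P1 : gra A = [set p | exists x, ran_IdA A x /\
                 p = (resolvent A x, x - resolvent A x)].
  apply/seteqP; split.
  - move=> [y u] /= Ayu; exists (y + u); split; first by exists y, u.
    by rewrite (resolventE Hip _ Hrho _ HA _ _ Ayu) [y + u]addrC addrK.
  - by move=> [y u] [x [Hx [-> ->]]]; exact: resolvent_spec.
split => //.
- split.
  + move=> HM; apply/seteqP; split=> // z _; exact: (max_surj Hip _ Hrho _ HM).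
  + move=> Hran; split=> // B HB sub; apply/seteqP; split=> // [[y v]] /= Byv.
    have : ran_IdA A (y + v) by rewrite Hran.
    case=> y' [u' [Ayu E]].
    have Byu : B y' u' by exact: (sub (y', u') Ayu).
    have [ey ev] := como_uniq Hip _ Hrho _ HB _ _ _ _ Byv Byu E.
    by move: ey ev => /= -> ->.
- move=> Hran; rewrite P1 Hran; apply/seteqP; split.
  + by move=> p [x [_ ->]]; exists x.
  + by move=> p [x ->]; exists x.
Qed.
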